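(* Let $K$ be a field, $\vartheta$ any one of the four types (left, right, pre-two-sided, two-sided), and $\mathcal A$ a $K$-algebra. Then $\mathcal A$ is $\vartheta$-stable if and only if one of the following holds: (1) $\mathcal A=K$ (i.e., $\mathcal A=K\cdot 1$); (2) $K\simeq\mathbb Z/2\mathbb Z$ and $\mathcal A\simeq\mathbb Z/2\mathbb Z\times\mathbb Z/2\mathbb Z$ (product algebra).
   Context: Algebras are associative, unital and nonzero. A $\vartheta$-ideal is a left ideal if $\vartheta$ = left, a right ideal if $\vartheta$ = right, and a two-sided ideal if $\vartheta$ is pre-two-sided or two-sided. $\mathcal A$ is $\vartheta$-stable if every $K$-subspace $V$ of $\mathcal A$ with $1\notin V$ is a $\vartheta$-ideal of $\mathcal A$. *)

(* Defs.v *)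
From mathcomp Require Import all_boot all_algebra.
Set Implicit Arguments. Unset Strict Implicit. Unset Printing Implicit Defensive.
Import GRing.Theory.
Local Open Scope ring_scope.

Inductive ideal_type := Left | Right | PreTwoSided | TwoSided.

Section Defs.
Variables (K : fieldType) (A : algType K).

Definition is_subspace (V : A -> Prop) : Prop :=
  [/\ V 0, (forall x y, V x -> V y -> V (x + y)) &
      (forall (k : K) x, V x -> V (k *: x))].

Definition is_left_ideal (V : A -> Prop) : Prop :=
  [/\ V 0, (forall x y, V x -> V y -> V (x - y)) &
      (forall a x, V x -> V (a * x))].

Definition is_right_ideal (V : A -> Prop) : Prop :=
  [/\ V 0, (forall x y, V x -> V y -> V (x - y)) &
      (forall a x, V x -> V (x * a))].

Definition is_twosided_ideal (V : A -> Prop) : Prop :=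
  is_left_ideal V /\ is_right_ideal V.

Definition is_theta_ideal (t : ideal_type) (V : A -> Prop) : Prop :=
  match t with
  | Left => is_left_ideal V
  | Right => is_right_ideal V
  | PreTwoSided | TwoSided => is_twosided_ideal V
  end.

Definition theta_stable (t : ideal_type) : Prop :=
  forall V : A -> Prop, is_subspace V -> ~ V 1 -> is_theta_ideal t V.

End Defs.

(* Main.v *)
Require Import Defs.
From mathcomp Require Import all_boot all_algebra.
Import GRing.Theory.
Local Open Scope ring_scope.
From mathcomp Require Import ring.
From Stdlib Require Import Classical.

Section NF.
Variables (K : fieldType) (A : algType K) (x : A).
Hypothesis Hx : forall k : K, x <> k%:A.

Definition nf (a b : K) : A := a%:A + b *: x.

Lemma one_neq0 : (1 : A) <> 0.
Proof. move=> E; apply: (Hx 0); by rewrite scale0r -(mulr1 x) E mulr0. Qed.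

Lemma nf_indep a b : nf a b = 0 -> a = 0 /\ b = 0.
Proof.
rewrite /nf => E.
have hb : b = 0.
  apply/eqP; apply/negPn/negP => nb; apply: (Hx (- (a / b))).
  have : b *: x = - a%:A by apply/eqP; rewrite -addr_eq0 addrC E.
  move=> E2; rewrite -[x](scalerK nb) E2 scalerN scalerA -scaleNr.
  by rewrite mulrC.
split=> //; move: E; rewrite hb scale0r addr0 => /eqP; rewrite scaler_eq0.
case/orP=> [/eqP//|/eqP h]; by case: one_neq0.
Qed.

Lemma nf_inj a b c d : nf a b = nf c d -> a = c /\ b = d.
Proof.
move=> E; have : nf (a - c) (b - d) = 0.
  by rewrite -(subrr (nf c d)) -{1}E /nf !scalerBl opprD addrACA.
by case/nf_indep => /eqP; rewrite subr_eq0 => /eqP -> /eqP; rewrite subr_eq0 => /eqP ->.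
Qed.

Lemma nfD a b c d : nf a b + nf c d = nf (a + c) (b + d).
Proof. by rewrite /nf !scalerDl addrACA. Qed.

Lemma nfZ k a b : k *: nf a b = nf (k * a) (k * b).
Proof. by rewrite /nf scalerDr !scalerA. Qed.

Lemma nfX : x = nf 0 1.
Proof. by rewrite /nf scale0r add0r scale1r. Qed.

Lemma nfK k : k%:A = nf k 0.
Proof. by rewrite /nf scale0r addr0. Qed.

Lemma nf1 : 1 = nf 1 0.
Proof. by rewrite -nfK scale1r. Qed.

Hypothesis xx : x * x = - x.

Lemma nfM a b c d : nf a b * nf c d = nf (a * c) (a * d + b * c - b * d).
Proof.
rewrite /nf mulrDl !mulrDr mulr_algl mulr_algr -!scalerAl -!scalerAr xx.
rewrite mul1r !scalerA !scalerN -scalerN scalerBl !scalerDl addrA. by rewrite scalerN (mulrC c b) !addrA.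
Qed.

End NF.
Arguments nf {K A}.
Arguments one_neq0 {K A x}.
Arguments nf_indep {K A x}.
Arguments nf_inj {K A x}.
Arguments nfD {K A}.
Arguments nfZ {K A}.
Arguments nfX {K A}.
Arguments nfK {K A}.
Arguments nf1 {K A}.
Arguments nfM {K A x}.


Definition mb (K : fieldType) (A : algType K) (b : bool) (a y : A) :=
  if b then a * y else y * a.
Arguments mb {K A}.

Section Stab.
Variables (K : fieldType) (A : algType K) (b : bool).
Hypothesis Hst : forall y : A, (forall k : K, y <> k%:A) ->
  forall a, exists k : K, mb b a y = k *: y.
Variable x : A.
Hypothesis Hx : forall k : K, x <> k%:A.

Lemma mbD (a y z : A) : mb b a (y + z) = mb b a y + mb b a z.
Proof. by rewrite /mb; case: b; rewrite ?mulrDr ?mulrDl. Qed.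

Lemma mbK (a : A) (k : K) : mb b a k%:A = k *: a.
Proof. by rewrite /mb; case: b; rewrite ?mulr_algr ?mulr_algl. Qed.

Lemma mbxx (y : A) : mb b y y = y * y.
Proof. by rewrite /mb; case: b. Qed.

Lemma notK1 (c : K) : forall k : K, x + c%:A <> k%:A.
Proof.
move=> k E; apply: (Hx (k - c)).
by rewrite scalerBl -E addrK.
Qed.

Lemma xnf c : x + c%:A = nf x c 1.
Proof. by rewrite (nfK x c) {1}(nfX x) nfD add0r addr0. Qed.

Lemma span (a : A) : exists p : K * K, a == nf x p.1 p.2.
Proof.
have [l El] := Hst x Hx a.
have [m Em] := Hst _ (notK1 1) a.
move: Em; rewrite mbD El mbK scale1r xnf nfZ {1}(nfX x) nfZ mulr0 !mulr1 => Em.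
exists (m, m - l) => /=; apply/eqP.
rewrite -(addKr (nf x 0 l) a) Em.
have -> : - nf x 0 l = nf x 0 (-l).
  by rewrite -scaleN1r nfZ mulr0 mulN1r.
by rewrite nfD add0r (addrC (-l)).
Qed.

Lemma xx : x * x = - x.
Proof.
have [l El] := Hst x Hx x.
have [m Em] := Hst _ (notK1 1) x.
move: Em; rewrite mbD El mbK scale1r xnf nfZ !mulr1.
rewrite {1 2}(nfX x) nfZ nfD mulr0 mulr1 add0r => /(nf_inj Hx) [m0 ml].
move: El; rewrite mbxx => ->.
have -> : l = -1 by apply/eqP; rewrite -subr_eq0 opprK ml -m0.
by rewrite scaleN1r.
Qed.

Lemma K01 (c : K) : c != 0 -> c = 1.
Proof.
move=> nc.
have [l El] := Hst _ (notK1 c) (x + c%:A).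
move: El; rewrite mbxx xnf (nfM xx) nfZ => /(nf_inj Hx) [E1 E2].
have lc : l = c by apply: (mulIf nc); rewrite -E1.
move: E2; rewrite lc !mulr1 !mul1r => /eqP; rewrite subr_eq => /eqP /addrI.
by [].
Qed.

End Stab.

Lemma pairD (K : fieldType) (a b c d : K) : ((a, b) : K * K) + (c, d) = (a + c, b + d).
Proof. reflexivity. Qed.
Lemma pairM (K : fieldType) (a b c d : K) : ((a, b) : K * K) * (c, d) = (a * c, b * d).
Proof. reflexivity. Qed.

Section Iso.
Variables (K : fieldType) (A : algType K) (x : A).
Hypothesis Hx : forall k : K, x <> k%:A.
Hypothesis Hxx : x * x = - x.
Hypothesis Hspan : forall a : A, exists p : K * K, a == nf x p.1 p.2.

Definition coord (a : A) := xchoose (Hspan a).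
Lemma coordE a : a = nf x (coord a).1 (coord a).2.
Proof. exact: (eqP (xchooseP (Hspan a))). Qed.
Definition fA (a : A) : K * K := ((coord a).1 - (coord a).2, (coord a).1).
Lemma fAE al be : fA (nf x al be) = (al - be, al).
Proof.
have [E1 E2] := nf_inj Hx _ _ _ _ (coordE (nf x al be)).
by rewrite /fA -E1 -E2.
Qed.
Lemma nf_all (a : A) : exists al be, a = nf x al be.
Proof. by exists (coord a).1, (coord a).2; apply: coordE. Qed.

Lemma iso_ex : exists f : A -> K * K,
       [/\ bijective f, f 1 = 1,
           (forall x y, f (x + y) = f x + f y),
           (forall x y, f (x * y) = f x * f y) &
           (forall (k : K) x, f (k *: x) = (k * (f x).1, k * (f x).2))].
Proof.
exists fA; split.
- exists (fun p : K * K => nf x p.2 (p.2 - p.1)).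
    move=> a; have [al [be ->]] := nf_all a; rewrite fAE /=.
    by congr (nf x _ _); rewrite opprB addrC subrK.
  by case=> p q; rewrite fAE opprB addrC subrK.
- by rewrite (nf1 x) fAE subr0.
- move=> a c; have [al [be ->]] := nf_all a; have [ga [de ->]] := nf_all c.
  by rewrite nfD !fAE pairD opprD addrACA.
- move=> a c; have [al [be ->]] := nf_all a; have [ga [de ->]] := nf_all c.
  rewrite (nfM Hxx) !fAE pairM; congr pair.
  by ring.
- move=> k a; have [al [be ->]] := nf_all a.
  by rewrite nfZ !fAE /= mulrBr.
Qed.

End Iso.

Lemma F2_cases (i : 'F_2) : i = 0 \/ i = 1.
Proof.
case: i => [[|[|n]] H].
- by left; apply/val_inj.
- by right; apply/val_inj.
- done.
Qed.

Lemma g_ex (K : fieldType) (K01 : forall c : K, c != 0 -> c = 1) :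
  exists g : K -> 'F_2,
       [/\ bijective g, g 1 = 1,
           (forall x y, g (x + y) = g x + g y) &
           (forall x y, g (x * y) = g x * g y)].
Proof.
have Kc (k : K) : k = 0 \/ k = 1.
  by case: (eqVneq k 0) => [->|/K01 ->]; [left|right].
have two : (1 + 1 : K) = 0.
  case: (Kc (1 + 1)) => // h; exfalso; move: h => /eqP.
  by rewrite -subr_eq0 addrK oner_eq0.
pose g (k : K) : 'F_2 := if k == 0 then 0 else 1.
have g0 : g 0 = 0 by rewrite /g eqxx.
have g1 : g 1 = 1 by rewrite /g oner_eq0.
exists g; split=> //.
- exists (fun i : 'F_2 => if i == 0 then 0 else 1 : K).
    by move=> k; case: (Kc k) => ->; rewrite ?g0 ?g1 // eqxx.
  move=> i; case: (F2_cases i) => ->; first by rewrite eqxx g0.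
  by rewrite oner_eq0 g1.
- move=> a c; case: (Kc a) => ->; case: (Kc c) => ->;
    rewrite ?add0r ?addr0 ?two ?g0 ?g1 ?add0r ?addr0 //; by apply/val_inj.
- move=> a c; case: (Kc a) => ->; case: (Kc c) => ->;
    rewrite ?mul0r ?mulr0 ?mul1r ?g0 ?g1 ?mul0r ?mulr0 ?mul1r //.
Qed.

Lemma stab_Hst (K : fieldType) (A : algType K) (b : bool) :
  (forall V : A -> Prop, is_subspace V -> ~ V 1 ->
     forall a v, V v -> V (mb b a v)) ->
  forall y : A, (forall k : K, y <> k%:A) ->
  forall a, exists k : K, mb b a y = k *: y.
Proof.
move=> H y Hy a.
pose V := fun z : A => exists k : K, z = k *: y.
have : V (mb b a y).
  apply: H.
  - split.
    + by exists 0; rewrite scale0r.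
    + by move=> u w [k1 ->] [k2 ->]; exists (k1 + k2); rewrite scalerDl.
    + by move=> k u [k1 ->]; exists (k * k1); rewrite scalerA.
  - case=> k E; case: (eqVneq k 0) => [k0|nk].
      apply: (Hy 0); by rewrite scale0r -(mulr1 y) E k0 !scale0r mulr0.
    apply: (Hy k^-1); by rewrite E scalerA mulVf // scale1r.
  - by exists 1; rewrite scale1r.
by case=> k E; exists k.
Qed.

Lemma forward (K : fieldType) (t : ideal_type) (A : algType K) :
  theta_stable A t ->
  ((forall a : A, exists k : K, a = k%:A)
   \/
   ((exists g : K -> 'F_2,
       [/\ bijective g, g 1 = 1,
           (forall x y, g (x + y) = g x + g y) &
           (forall x y, g (x * y) = g x * g y)]) /\
    (exists f : A -> K * K,
       [/\ bijective f, f 1 = 1,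
           (forall x y, f (x + y) = f x + f y),
           (forall x y, f (x * y) = f x * f y) &
           (forall (k : K) x, f (k *: x) = (k * (f x).1, k * (f x).2))]))).
Proof.
move=> St.
have [b Hst] : exists b : bool, forall y : A, (forall k : K, y <> k%:A) ->
    forall a, exists k : K, mb b a y = k *: y.
  case: t St => St.
  - exists true; apply: stab_Hst => V HV N a v Vv.
    by case: (St V HV N) => _ _ h; apply: h.
  - exists false; apply: stab_Hst => V HV N a v Vv.
    by case: (St V HV N) => _ _ h; apply: h.
  - exists true; apply: stab_Hst => V HV N a v Vv.
    by case: (St V HV N) => [[_ _ h] _]; apply: h.
  - exists true; apply: stab_Hst => V HV N a v Vv.
    by case: (St V HV N) => [[_ _ h] _]; apply: h.
case: (classic (forall a : A, exists k : K, a = k%:A)) => [H|H]; first by left.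
right.
have [x Hx] : exists x : A, forall k : K, x <> k%:A.
  apply: NNPP => N; apply: H => a; apply: NNPP => Na; apply: N; exists a.
  by move=> k E; apply: Na; exists k.
split.
  by apply: g_ex => c; apply: (@K01 _ _ _ Hst _ Hx).
exact: (@iso_ex _ _ _ Hx (@xx _ _ _ Hst _ Hx) (@span _ _ _ Hst _ Hx)).
Qed.

Lemma ideal_of (K : fieldType) (A : algType K) (t : ideal_type) (V : A -> Prop) :
  is_subspace V ->
  (forall a v, V v -> V (a * v) /\ V (v * a)) -> is_theta_ideal t V.
Proof.
case=> V0 VD VZ H.
have VB u w : V u -> V w -> V (u - w).
  by move=> Vu Vw; apply: VD => //; rewrite -scaleN1r; apply: VZ.
have L : is_left_ideal V by split=> // a v /(H a) [].
have R : is_right_ideal V by split=> // a v /(H a) [].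
by case: t => //=; split.
Qed.

Lemma back1 (K : fieldType) (t : ideal_type) (A : algType K) :
  (forall a : A, exists k : K, a = k%:A) -> theta_stable A t.
Proof.
move=> H V HV N1; have [V0 VD VZ] := HV.
have Z v : V v -> v = 0.
  move=> Vv; have [k Ek] := H v; case: (eqVneq k 0) => [k0|nk].
    by rewrite Ek k0 scale0r.
  exfalso; apply: N1; have := VZ k^-1 _ Vv.
  by rewrite Ek scalerA mulVf // scale1r.
apply: ideal_of => // a v /Z ->; by rewrite mulr0 mul0r.
Qed.

Lemma back2 (K : fieldType) (t : ideal_type) (A : algType K) :
  (exists g : K -> 'F_2,
       [/\ bijective g, g 1 = 1,
           (forall x y, g (x + y) = g x + g y) &
           (forall x y, g (x * y) = g x * g y)]) ->
  (exists f : A -> K * K,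
       [/\ bijective f, f 1 = 1,
           (forall x y, f (x + y) = f x + f y),
           (forall x y, f (x * y) = f x * f y) &
           (forall (k : K) x, f (k *: x) = (k * (f x).1, k * (f x).2))]) ->
  theta_stable A t.
Proof.
case=> g [[gi gK _] g1 gD _]; case=> f [[fi fK _] f1 fD fM _].
have ginj : injective g by apply: (can_inj gK).
have finj : injective f by apply: (can_inj fK).
have g0 : g 0 = 0.
  by apply: (@addrI _ (g 0)); rewrite -gD !addr0.
have f0 : f 0 = 0.
  by apply: (@addrI _ (f 0)); rewrite -fD !addr0.
have Kc (k : K) : k = 0 \/ k = 1.
  case: (F2_cases (g k)) => h; [left|right]; apply: ginj; by rewrite ?g0 ?g1.
have key (a v : A) : v <> 1 -> (a * v = 0 \/ a * v = v) /\ (v * a = 0 \/ v * a = v).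
  move=> nv.
  have nfv : f v <> (1, 1) by move=> E; apply: nv; apply: finj; rewrite f1.
  suff : (f a * f v = 0 \/ f a * f v = f v) /\ (f v * f a = 0 \/ f v * f a = f v).
    by rewrite -!fM -f0 => -[[/finj|/finj] h1 [/finj|/finj] h2]; split; auto.
  move: nfv; case: (f a) => p1 p2; case: (f v) => q1 q2; rewrite !pairM.
  case: (Kc p1) => ->; case: (Kc p2) => ->; case: (Kc q1) => ->; case: (Kc q2) => ->;
    rewrite ?mulr0 ?mul0r ?mulr1 ?mul1r => nq; try (by case: nq);
    split; solve [by left | by right].
move=> V HV N1; apply: ideal_of => // a v Vv.
have nv : v <> 1 by move=> E; apply: N1; rewrite -E.
have [V0 _ _] := HV.
by case: (key a v nv) => [[->|->] [->|->]].
Qed.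

Theorem proposition7p13 (K : fieldType) (t : ideal_type) (A : algType K) :
  theta_stable A t <->
  ((forall a : A, exists k : K, a = k%:A)
   \/
   ((exists g : K -> 'F_2,
       [/\ bijective g, g 1 = 1,
           (forall x y, g (x + y) = g x + g y) &
           (forall x y, g (x * y) = g x * g y)]) /\
    (exists f : A -> K * K,
       [/\ bijective f, f 1 = 1,
           (forall x y, f (x + y) = f x + f y),
           (forall x y, f (x * y) = f x * f y) &
           (forall (k : K) x, f (k *: x) = (k * (f x).1, k * (f x).2))]))).
Proof.
split; first exact: forward.
case=> [H|[G F]]; first exact: back1.
exact: back2 G F.
Qed.
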